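(* For every strategy profile $s$: if $\mathsf{SPE}(s)$ then $\mathsf{Nash}(s)$.
   Context: Let $P=\{A,B\}$ and $\mathrm{Choice}=\{d,r\}$; a payoff function is $f:P\to\mathbb{R}$. Strategy profiles are elements of the final coalgebra of $X\mapsto\mathbb{R}^P+P\times\mathrm{Choice}\times X\times X$ (finite or infinite trees $\langle f\rangle$ or $\langle p,c,s_d,s_r\rangle$); $\sim_s$ denotes bisimilarity of profiles. The payoff $\widehat{s}$ is the partial function given by $\widehat{\langle f\rangle}=f$, $\widehat{\langle p,d,s_d,s_r\rangle}=\widehat{s_d}$, $\widehat{\langle p,r,s_d,s_r\rangle}=\widehat{s_r}$ (undefined if the unfolding does not terminate). Convergence $\downarrow$: least predicate with $\downarrow(s)$ iff $s=\langle f\rangle$, or $s=\langle p,d,s_d,s_r\rangle\wedge\downarrow(s_d)$, or $s=\langle p,r,s_d,s_r\rangle\wedge\downarrow(s_r)$. Strong convergence $\Downarrow$: greatest predicate with $\Downarrow(s)$ iff $s=\langle f\rangle$, or $s=\langle p,c,s_d,s_r\rangle$ with $\downarrow(s),\Downarrow(s_d),\Downarrow(s_r)$. For a predicate $\Phi$, $\Box\Phi$ is the greatest predicate such that $\Box\Phi(s)$ iff $\Phi(s)$ and, whenever $s=\langle p,c,s_d,s_r\rangle$, $\Box\Phi(s_d)$ and $\Box\Phi(s_r)$. $\mathsf{PE}(s)$ holds iff $\Downarrow(s)$ and (if $s=\langle p,d,s_d,s_r\rangle$ then $\widehat{s_d}(p)\ge\widehat{s_r}(p)$) and (if $s=\langle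 p,r,s_d,s_r\rangle$ then $\widehat{s_r}(p)\ge\widehat{s_d}(p)$); $\mathsf{SPE}=\Box\,\mathsf{PE}$. For an agent $p$, the convertibility relation $\vdash_p\dashv$ is the least (inductively defined) relation such that: if $s\sim_s s'$ then $s\vdash_p\dashv s'$; if $s_1\vdash_p\dashv s_1'$ and $s_2\vdash_p\dashv s_2'$ then $\langle p,c,s_1,s_2\rangle\vdash_p\dashv\langle p,c',s_1',s_2'\rangle$ for any $c,c'\in\mathrm{Choice}$; and if $s_1\vdash_p\dashv s_1'$ and $s_2\vdash_p\dashv s_2'$ then $\langle p',c,s_1,s_2\rangle\vdash_p\dashv\langle p',c,s_1',s_2'\rangle$ for any agent $p'$ and $c\in\mathrm{Choice}$. $\mathsf{Nash}(s)$ means: for every agent $p$ and every profile $s'$ with $s\vdash_p\dashv s'$, the payoffs $\widehat{s}(p)$ and $\widehat{s'}(p)$ are defined and $\widehat{s}(p)\ge\widehat{s'}(p)$. *)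

(* Defs.v *)
From Stdlib Require Import Reals.
Open Scope R_scope.

Inductive Agent : Set := A | B.
Inductive Choice : Set := d | r.

(* Final coalgebra of X |-> R^P + P x Choice x X x X *)
CoInductive Strat : Type :=
| SLeaf : (Agent -> R) -> Strat
| SNode : Agent -> Choice -> Strat -> Strat -> Strat.

CoInductive bisim : Strat -> Strat -> Prop :=
| bisim_leaf : forall f, bisim (SLeaf f) (SLeaf f)
| bisim_node : forall p c s1 s2 s1' s2',
    bisim s1 s1' -> bisim s2 s2' -> bisim (SNode p c s1 s2) (SNode p c s1' s2').

(* graph of the partial payoff function s |-> \hat s : (Payoff s f) means \hat s = f *)
Inductive Payoff : Strat -> (Agent -> R) -> Prop :=
| Payoff_leaf : forall f, Payoff (SLeaf f) f
| Payoff_d : forall p sd sr f, Payoff sd f -> Payoff (SNode p d sd sr) f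
| Payoff_r : forall p sd sr f, Payoff sr f -> Payoff (SNode p r sd sr) f.

Inductive Conv : Strat -> Prop :=
| Conv_leaf : forall f, Conv (SLeaf f)
| Conv_d : forall p sd sr, Conv sd -> Conv (SNode p d sd sr)
| Conv_r : forall p sd sr, Conv sr -> Conv (SNode p r sd sr).

CoInductive SConv : Strat -> Prop :=
| SConv_leaf : forall f, SConv (SLeaf f)
| SConv_node : forall p c sd sr,
    Conv (SNode p c sd sr) -> SConv sd -> SConv sr -> SConv (SNode p c sd sr).

CoInductive Always (Phi : Strat -> Prop) : Strat -> Prop :=
| Always_leaf : forall f, Phi (SLeaf f) -> Always Phi (SLeaf f)
| Always_node : forall p c sd sr,
    Phi (SNode p c sd sr) -> Always Phi sd -> Always Phi sr ->
    Always Phi (SNode p c sd sr).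

Definition payoff_ge (p : Agent) (s1 s2 : Strat) : Prop :=
  exists f1 f2, Payoff s1 f1 /\ Payoff s2 f2 /\ f1 p >= f2 p.

Definition PE (s : Strat) : Prop :=
  SConv s /\
  (forall p sd sr, s = SNode p d sd sr -> payoff_ge p sd sr) /\
  (forall p sd sr, s = SNode p r sd sr -> payoff_ge p sr sd).

Definition SPE : Strat -> Prop := Always PE.

Inductive Convert (p : Agent) : Strat -> Strat -> Prop :=
| Convert_bisim : forall s s', bisim s s' -> Convert p s s'
| Convert_own : forall c c' s1 s2 s1' s2',
    Convert p s1 s1' -> Convert p s2 s2' ->
    Convert p (SNode p c s1 s2) (SNode p c' s1' s2')
| Convert_other : forall p' c s1 s2 s1' s2',
    Convert p s1 s1' -> Convert p s2 s2' ->
    Convert p (SNode p' c s1 s2) (SNode p' c s1' s2').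

Definition Nash (s : Strat) : Prop :=
  forall p s', Convert p s s' -> payoff_ge p s s'.

(* Main.v *)
Require Import Defs.
From Stdlib Require Import Reals Lra.

Lemma payoff_unique : forall s f g, Payoff s f -> Payoff s g -> f = g.
Proof.
  intros s f g H; revert g; induction H; intros g H'; inversion H'; subst; auto.
Qed.

Lemma conv_payoff : forall s, Conv s -> exists f, Payoff s f.
Proof.
  induction 1.
  - eexists; constructor.
  - destruct IHConv as [f Hf]; exists f; constructor; auto.
  - destruct IHConv as [f Hf]; exists f; constructor; auto.
Qed.

Lemma bisim_payoff : forall s f, Payoff s f -> forall s', bisim s s' -> Payoff s' f.
Proof.
  induction 1; intros s' Hb; inversion Hb; subst; constructor; auto.
Qed.

Lemma spe_payoff : forall s, SPE s -> exists f, Payoff s f.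
Proof.
  intros s H. inversion H as [f Hf|p c sd sr Hpe _ _]; subst.
  - exists f; constructor.
  - destruct Hpe as [Hc _]. inversion Hc; subst. apply conv_payoff; auto.
Qed.

Lemma key : forall p s s', Convert p s s' -> SPE s -> payoff_ge p s s'.
Proof.
  intros p s s' H; induction H; intros Hs.
  - destruct (spe_payoff _ Hs) as [f Hf]. exists f, f. repeat split; auto.
    + eapply bisim_payoff; eauto.
    + lra.
  - inversion Hs as [|? ? ? ? Hpe H1 H2]; subst.
    destruct (IHConvert1 H1) as [a [a' [Ha [Ha' Haa]]]].
    destruct (IHConvert2 H2) as [b [b' [Hb [Hb' Hbb]]]].
    destruct Hpe as [_ [Pd Pr]].
    destruct c.
    + destruct (Pd _ _ _ eq_refl) as [x [y [Hx [Hy Hxy]]]].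
      rewrite (payoff_unique _ _ _ Hx Ha) in Hxy.
      rewrite (payoff_unique _ _ _ Hy Hb) in Hxy.
      exists a. destruct c'.
      * exists a'. repeat split; try (constructor; assumption); auto; try lra.
      * exists b'. repeat split; try (constructor; assumption); auto; try lra.
    + destruct (Pr _ _ _ eq_refl) as [x [y [Hx [Hy Hxy]]]].
      rewrite (payoff_unique _ _ _ Hx Hb) in Hxy.
      rewrite (payoff_unique _ _ _ Hy Ha) in Hxy.
      exists b. destruct c'.
      * exists a'. repeat split; try (constructor; assumption); auto; try lra.
      * exists b'. repeat split; try (constructor; assumption); auto; try lra.
  - inversion Hs as [|? ? ? ? Hpe H1 H2]; subst.
    destruct c.
    + destruct (IHConvert1 H1) as [a [a' [Ha [Ha' Haa]]]].
      exists a, a'. repeat split; try (constructor; assumption); auto; try lra.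
    + destruct (IHConvert2 H2) as [b [b' [Hb [Hb' Hbb]]]].
      exists b, b'. repeat split; try (constructor; assumption); auto; try lra.
Qed.

Theorem mainTheorem13 : forall s : Strat, SPE s -> Nash s.
Proof.
  intros s Hs p s' Hc. apply key; auto.
Qed.
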